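(* Suppose Assumptions 1–4 hold and $p$ is convex. Suppose also that $p(Q)=0$ for some $Q>0$ and that the ratio $\mu=\partial_+p(0)/\partial_-p(Q)$ is finite. Then every Cournot candidate $\mathbf{x}$ satisfies $\gamma(\mathbf{x})\ge f(\mu)$.
   Context: Cournot model: $N$ suppliers, inverse demand $p:[0,\infty)\to[0,\infty)$, supplier $n$ has cost $C_n:[0,\infty)\to[0,\infty)$ and chooses $x_n\ge0$; $X=\sum_n x_n$. $\partial_\pm$ denote right/left derivatives; $C_n'(0)$ is the right derivative at $0$. Assumption 1: each $C_n$ is convex, continuous, nondecreasing on $[0,\infty)$, continuously differentiable on $(0,\infty)$, with $C_n(0)=0$. Assumption 2: $p$ is continuous, nonnegative, nonincreasing, $p(0)>0$; its right derivative at $0$ exists and at every $q>0$ its left and right derivatives exist. Assumption 3: there exists $R>0$ such that $p(R)\le\min_n C_n'(0)$. Assumption 4: $p(0)>\min_n C_n'(0)$. Social welfare of $\mathbf{x}\ge0$: $W(\mathbf{x})=\int_0^X p(q)\,dq-\sum_{n=1}^N C_n(x_n)$; a social optimum $\mathbf{x}^S$ maximizes $W$. Efficiency: $\gamma(\mathbf{x})=W(\mathbf{x})/W(\mathbf{x}^S)$. A nonnegative vector $\mathbf{x}$ is a Cournot candidate if for every $n$: $C_n'(x_n)\le p(X)+x_n\,\partial_-p(X)$ whenever $x_n>0$, and $C_n'(x_n)\ge p(X)+x_n\,\partial_+p(X)$. For $\overline c\ge1$: $f(\overline c)=\dfrac{\phi^2+2}{\phi^2+2\phi+\overline c}$ with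 $\phi=\max\left\{\dfrac{2-\overline c+\sqrt{\overline c^{\,2}-4\overline c+12}}{2},1\right\}$. *)

(* Defs.v *)
From Stdlib Require Import Reals Lra ClassicalEpsilon.
Open Scope R_scope.

Fixpoint sumN (f : nat -> R) (N : nat) : R :=
  match N with
  | O => 0
  | S k => sumN f k + f k
  end.

Definition right_deriv (f : R -> R) (x l : R) : Prop :=
  forall eps, 0 < eps -> exists delta, 0 < delta /\
    forall h, 0 < h < delta -> Rabs ((f (x + h) - f x) / h - l) < eps.

Definition left_deriv (f : R -> R) (x l : R) : Prop :=
  forall eps, 0 < eps -> exists delta, 0 < delta /\
    forall h, - delta < h < 0 -> Rabs ((f (x + h) - f x) / h - l) < eps.

Definition convex_nonneg (f : R -> R) : Prop :=
  forall x y t, 0 <= x -> 0 <= y -> 0 <= t <= 1 ->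
    f (t * x + (1 - t) * y) <= t * f x + (1 - t) * f y.

Definition continuous_nonneg (f : R -> R) : Prop :=
  forall x, 0 <= x -> forall eps, 0 < eps -> exists delta, 0 < delta /\
    forall y, 0 <= y -> Rabs (y - x) < delta -> Rabs (f y - f x) < eps.

Definition nondecreasing_nonneg (f : R -> R) : Prop :=
  forall x y, 0 <= x -> x <= y -> f x <= f y.

Definition nonincreasing_nonneg (f : R -> R) : Prop :=
  forall x y, 0 <= x -> x <= y -> f y <= f x.

(* Assumption 1.  dC n is the derivative of C n: C_n'(x) for x > 0,
   and the right derivative at 0 for x = 0. *)
Definition Assumption1 (N : nat) (C dC : nat -> R -> R) : Prop :=
  forall n, (n < N)%nat ->
    convex_nonneg (C n) /\ continuous_nonneg (C n) /\
    nondecreasing_nonneg (C n) /\ (forall x, 0 <= x -> 0 <= C n x) /\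
    C n 0 = 0 /\
    right_deriv (C n) 0 (dC n 0) /\
    (forall x, 0 < x -> derivable_pt_lim (C n) x (dC n x)) /\
    (forall x, 0 < x -> continuity_pt (dC n) x).

(* Assumption 2.  dpR q = right derivative of p at q >= 0,
   dpL q = left derivative of p at q > 0. *)
Definition Assumption2 (p dpL dpR : R -> R) : Prop :=
  continuous_nonneg p /\ (forall q, 0 <= q -> 0 <= p q) /\
  nonincreasing_nonneg p /\ 0 < p 0 /\
  right_deriv p 0 (dpR 0) /\
  (forall q, 0 < q -> left_deriv p q (dpL q) /\ right_deriv p q (dpR q)).

Definition Assumption3 (N : nat) (p : R -> R) (dC : nat -> R -> R) : Prop :=
  exists Rb, 0 < Rb /\ forall n, (n < N)%nat -> p Rb <= dC n 0.

Definition Assumption4 (N : nat) (p : R -> R) (dC : nat -> R -> R) : Prop :=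
  exists n, (n < N)%nat /\ dC n 0 < p 0.

(* Riemann integral of f over [0, b] (well defined when f is Riemann
   integrable there, e.g. continuous; RiemannInt is proof-irrelevant). *)
Definition RInt0 (f : R -> R) (b : R) : R :=
  epsilon (inhabits 0)
    (fun I => exists pr : Riemann_integrable f 0 b, RiemannInt pr = I).

Definition nonneg_profile (N : nat) (x : nat -> R) : Prop :=
  forall n, (n < N)%nat -> 0 <= x n.

Definition welfare (N : nat) (p : R -> R) (C : nat -> R -> R) (x : nat -> R) : R :=
  RInt0 p (sumN x N) - sumN (fun n => C n (x n)) N.

Definition social_optimum (N : nat) (p : R -> R) (C : nat -> R -> R)
    (xS : nat -> R) : Prop :=
  nonneg_profile N xS /\
  forall y, nonneg_profile N y -> welfare N p C y <= welfare N p C xS.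

Definition efficiency (N : nat) (p : R -> R) (C : nat -> R -> R)
    (x xS : nat -> R) : R :=
  welfare N p C x / welfare N p C xS.

Definition cournot_candidate (N : nat) (p dpL dpR : R -> R)
    (dC : nat -> R -> R) (x : nat -> R) : Prop :=
  nonneg_profile N x /\
  forall n, (n < N)%nat ->
    (0 < x n -> dC n (x n) <= p (sumN x N) + x n * dpL (sumN x N)) /\
    p (sumN x N) + x n * dpR (sumN x N) <= dC n (x n).

Definition phi_f (c : R) : R :=
  Rmax ((2 - c + sqrt (c ^ 2 - 4 * c + 12)) / 2) 1.

Definition f_bound (c : R) : R :=
  (phi_f c ^ 2 + 2) / (phi_f c ^ 2 + 2 * phi_f c + c).

(* Main.v *)
Require Import Defs.
From Stdlib Require Import Reals Lra Psatz Arith Lia ClassicalEpsilon.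
From Coquelicot Require Import Coquelicot.
Open Scope R_scope.


Lemma Rmax0_lip y z : Rabs (Rmax 0 y - Rmax 0 z) <= Rabs (y - z).
Proof.
  unfold Rmax; destruct (Rle_dec 0 y), (Rle_dec 0 z);
  unfold Rabs; repeat destruct Rcase_abs; lra.
Qed.

Lemma cont_ext (f : R -> R) : continuous_nonneg f ->
  forall z, continuous (fun q => f (Rmax 0 q)) z.
Proof.
  intros Hf z. apply continuity_pt_filterlim.
  intros eps Heps.
  assert (H0: 0 <= Rmax 0 z) by apply Rmax_l.
  destruct (Hf _ H0 eps Heps) as [d [Hd Hd']].
  exists d; split; auto.
  intros y [_ Hy]. simpl in *. unfold R_dist in *.
  apply Hd'. apply Rmax_l.
  eapply Rle_lt_trans; [apply Rmax0_lip|]. exact Hy.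
Qed.

Lemma ex_int (f : R -> R) a b : continuous_nonneg f -> 0 <= a -> 0 <= b -> ex_RInt f a b.
Proof.
  intros Hf Ha Hb.
  apply (ex_RInt_ext (fun q => f (Rmax 0 q))).
  - intros q Hq. f_equal. unfold Rmax. destruct Rle_dec; auto.
    exfalso. unfold Rmin in Hq. destruct (Rle_dec a b); lra.
  - apply (@ex_RInt_continuous R_CompleteNormedModule). intros; apply cont_ext; auto.
Qed.

Lemma F_eq (f : R -> R) b : continuous_nonneg f -> 0 <= b -> RInt0 f b = RInt f 0 b.
Proof.
  intros Hf Hb. unfold RInt0.
  assert (Hr : Riemann_integrable f 0 b).
  { apply ex_RInt_Reals_0. apply ex_int; auto; lra. }
  destruct (epsilon_spec (inhabits 0)
    (fun I => exists pr : Riemann_integrable f 0 b, RiemannInt pr = I))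
    as [pr Hpr].
  { exists (RiemannInt Hr), Hr; auto. }
  rewrite <- Hpr. symmetry. apply RInt_Reals.
Qed.

Lemma Chas (f : R -> R) a b : continuous_nonneg f -> 0 <= a -> 0 <= b ->
  RInt f 0 b = RInt f 0 a + RInt f a b.
Proof.
  intros Hf Ha Hb. symmetry.
  apply (@RInt_Chasles R_CompleteNormedModule); apply ex_int; auto; lra.
Qed.

Lemma aff_int (al be a b : R) :
  RInt (fun q => al + be * q) a b = al * (b - a) + be * (b*b - a*a) / 2.
Proof.
  assert (H : is_RInt (fun q => al + be * q) a b
     (minus ((fun q => al * q + be * (q*q) / 2) b) ((fun q => al * q + be * (q*q)/2) a))).
  { apply (@is_RInt_derive R_CompleteNormedModule (fun q => al * q + be * (q*q) / 2)).
    + intros q _. auto_derive; auto. simpl; field.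
    + intros q _. apply continuity_pt_filterlim.
      apply continuity_pt_plus. apply continuity_pt_const. intros u v; auto.
      apply continuity_pt_scal. apply derivable_continuous_pt. apply derivable_pt_id. }
  rewrite (is_RInt_unique _ _ _ _ H).
  unfold minus, plus, opp; simpl. field.
Qed.

Lemma int_le_aff (f : R -> R) al be a b : continuous_nonneg f -> 0 <= a <= b ->
  (forall q, a < q < b -> f q <= al + be * q) ->
  RInt f a b <= al * (b - a) + be * (b*b - a*a) / 2.
Proof.
  intros Hf Hab H. rewrite <- aff_int.
  apply RInt_le; try lra. apply ex_int; auto; lra.
  apply (@ex_RInt_continuous R_CompleteNormedModule).
  intros q _. apply continuity_pt_filterlim.
      apply continuity_pt_plus. apply continuity_pt_const. intros u v; auto.
      apply continuity_pt_scal. apply derivable_continuous_pt. apply derivable_pt_id.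
  auto.
Qed.

Lemma int_ge_aff (f : R -> R) al be a b : continuous_nonneg f -> 0 <= a <= b ->
  (forall q, a < q < b -> al + be * q <= f q) ->
  al * (b - a) + be * (b*b - a*a) / 2 <= RInt f a b.
Proof.
  intros Hf Hab H. rewrite <- aff_int.
  apply RInt_le; try lra. 2: apply ex_int; auto; lra.
  apply (@ex_RInt_continuous R_CompleteNormedModule).
  intros q _. apply continuity_pt_filterlim.
      apply continuity_pt_plus. apply continuity_pt_const. intros u v; auto.
      apply continuity_pt_scal. apply derivable_continuous_pt. apply derivable_pt_id.
  auto.
Qed.

Lemma conv3 f a b c : convex_nonneg f -> 0 <= a -> a < b -> b < c ->
  (c - a) * f b <= (c - b) * f a + (b - a) * f c.
Proof.
  intros Hf Ha Hab Hbc.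
  set (t := (c - b) / (c - a)).
  assert (Ht : 0 <= t <= 1).
  { unfold t; split. apply Rmult_le_pos; [lra|]. left; apply Rinv_0_lt_compat; lra.
    apply (Rmult_le_reg_r (c - a)); [lra|]. unfold Rdiv. rewrite Rmult_assoc, Rinv_l; lra. }
  pose proof (Hf a c t Ha ltac:(lra) Ht) as H.
  replace (t * a + (1 - t) * c) with b in H by (unfold t; field; lra).
  assert (E1 : t * (c - a) = c - b) by (unfold t; field; lra).
  assert (E2 : (1 - t) * (c - a) = b - a) by (unfold t; field; lra).
  apply (Rmult_le_compat_l (c - a)) in H; [|lra].
  rewrite <- E1, <- E2. nra.
Qed.

Lemma rd_le f a l K d0 : right_deriv f a l -> 0 < d0 ->
  (forall h, 0 < h < d0 -> f (a + h) - f a <= K * h) -> l <= K.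
Proof.
  intros Hd Hd0 H. destruct (Rle_dec l K) as [|Hn]; auto. exfalso.
  destruct (Hd (l - K) ltac:(lra)) as [d [Hd1 Hd2]].
  set (h := Rmin d d0 / 2).
  assert (Hh : 0 < h < d /\ h < d0).
  { unfold h, Rmin; destruct Rle_dec; lra. }
  specialize (Hd2 h ltac:(lra)). specialize (H h ltac:(lra)).
  set (q := (f (a + h) - f a) / h) in *.
  assert (Eq : q * h = f (a + h) - f a) by (unfold q; field; lra).
  apply Rabs_def2 in Hd2. nra.
Qed.

Lemma rd_ge f a l K d0 : right_deriv f a l -> 0 < d0 ->
  (forall h, 0 < h < d0 -> K * h <= f (a + h) - f a) -> K <= l.
Proof.
  intros Hd Hd0 H. destruct (Rle_dec K l) as [|Hn]; auto. exfalso.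
  destruct (Hd (K - l) ltac:(lra)) as [d [Hd1 Hd2]].
  set (h := Rmin d d0 / 2).
  assert (Hh : 0 < h < d /\ h < d0).
  { unfold h, Rmin; destruct Rle_dec; lra. }
  specialize (Hd2 h ltac:(lra)). specialize (H h ltac:(lra)).
  set (q := (f (a + h) - f a) / h) in *.
  assert (Eq : q * h = f (a + h) - f a) by (unfold q; field; lra).
  apply Rabs_def2 in Hd2. nra.
Qed.

Lemma ld_le f a l K d0 : left_deriv f a l -> 0 < d0 ->
  (forall h, - d0 < h < 0 -> K * h <= f (a + h) - f a) -> l <= K.
Proof.
  intros Hd Hd0 H. destruct (Rle_dec l K) as [|Hn]; auto. exfalso.
  destruct (Hd (l - K) ltac:(lra)) as [d [Hd1 Hd2]].
  set (h := - (Rmin d d0 / 2)).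
  assert (Hh : - d < h < 0 /\ - d0 < h).
  { unfold h, Rmin; destruct Rle_dec; lra. }
  specialize (Hd2 h ltac:(lra)). specialize (H h ltac:(lra)).
  set (q := (f (a + h) - f a) / h) in *.
  assert (Eq : q * h = f (a + h) - f a) by (unfold q; field; lra).
  apply Rabs_def2 in Hd2. nra.
Qed.

Lemma ld_ge f a l K d0 : left_deriv f a l -> 0 < d0 ->
  (forall h, - d0 < h < 0 -> f (a + h) - f a <= K * h) -> K <= l.
Proof.
  intros Hd Hd0 H. destruct (Rle_dec K l) as [|Hn]; auto. exfalso.
  destruct (Hd (K - l) ltac:(lra)) as [d [Hd1 Hd2]].
  set (h := - (Rmin d d0 / 2)).
  assert (Hh : - d < h < 0 /\ - d0 < h).
  { unfold h, Rmin; destruct Rle_dec; lra. }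
  specialize (Hd2 h ltac:(lra)). specialize (H h ltac:(lra)).
  set (q := (f (a + h) - f a) / h) in *.
  assert (Eq : q * h = f (a + h) - f a) by (unfold q; field; lra).
  apply Rabs_def2 in Hd2. nra.
Qed.

Lemma conv_rd f a b l : convex_nonneg f -> right_deriv f a l -> 0 <= a -> a < b ->
  f a + l * (b - a) <= f b.
Proof.
  intros Hf Hd Ha Hab.
  set (K := (f b - f a) / (b - a)).
  assert (EK : K * (b - a) = f b - f a) by (unfold K; field; lra).
  assert (l <= K).
  { apply (rd_le f a l K (b - a)); [auto|lra|].
    intros h Hh. pose proof (conv3 f a (a + h) b Hf Ha ltac:(lra) ltac:(lra)).
    nra. }
  nra.
Qed.

Lemma conv_ld f a b l : convex_nonneg f -> left_deriv f b l -> 0 <= a -> a < b ->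
  f b - f a <= l * (b - a).
Proof.
  intros Hf Hd Ha Hab.
  set (K := (f b - f a) / (b - a)).
  assert (EK : K * (b - a) = f b - f a) by (unfold K; field; lra).
  assert (K <= l).
  { apply (ld_ge f b l K (b - a)); [auto|lra|].
    intros h Hh. pose proof (conv3 f a (b + h) b Hf Ha ltac:(lra) ltac:(lra)).
    nra. }
  nra.
Qed.

Lemma conv_ld2 f b c l : convex_nonneg f -> left_deriv f b l -> 0 < b -> b < c ->
  l * (c - b) <= f c - f b.
Proof.
  intros Hf Hd Hb Hbc.
  set (K := (f c - f b) / (c - b)).
  assert (EK : K * (c - b) = f c - f b) by (unfold K; field; lra).
  assert (l <= K).
  { apply (ld_le f b l K b); [auto|lra|].
    intros h Hh. pose proof (conv3 f (b + h) b c Hf ltac:(lra) ltac:(lra) ltac:(lra)).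
    nra. }
  nra.
Qed.

Lemma conv_lr f b l r : convex_nonneg f -> left_deriv f b l -> right_deriv f b r -> 0 < b ->
  l <= r.
Proof.
  intros Hf Hl Hr Hb. apply (rd_ge f b r l 1 Hr); [lra|].
  intros h Hh. pose proof (conv_ld2 f b (b + h) l Hf Hl Hb ltac:(lra)). nra.
Qed.

Lemma rd_nonneg f a l : nondecreasing_nonneg f -> right_deriv f a l -> 0 <= a -> 0 <= l.
Proof.
  intros Hf Hd Ha. apply (rd_ge f a l 0 1 Hd); [lra|].
  intros h Hh. pose proof (Hf a (a + h) Ha ltac:(lra)). lra.
Qed.

Lemma ld_nonpos f b l : convex_nonneg f -> nonincreasing_nonneg f -> left_deriv f b l -> 0 < b -> l <= 0.
Proof.
  intros Hf Hn Hd Hb. pose proof (conv_ld2 f b (b + 1) l Hf Hd Hb ltac:(lra)).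
  pose proof (Hn b (b + 1) ltac:(lra) ltac:(lra)). lra.
Qed.

Lemma dpl_rd f x l : derivable_pt_lim f x l -> right_deriv f x l.
Proof.
  intros H eps He. destruct (H eps He) as [d Hd]. exists d; split. apply cond_pos.
  intros h Hh. apply Hd. lra. rewrite Rabs_right; lra.
Qed.

Lemma dpl_ld f x l : derivable_pt_lim f x l -> left_deriv f x l.
Proof.
  intros H eps He. destruct (H eps He) as [d Hd]. exists d; split. apply cond_pos.
  intros h Hh. apply Hd. lra. rewrite Rabs_left; lra.
Qed.

Lemma cost_support f df x y : convex_nonneg f -> 0 <= x -> 0 <= y ->
  right_deriv f x (df x) -> (0 < x -> left_deriv f x (df x)) ->
  f x + df x * (y - x) <= f y.
Proof.
  intros Hf Hx Hy Hr Hl.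
  destruct (Rtotal_order x y) as [H|[H|H]].
  - apply conv_rd; auto.
  - subst; lra.
  - pose proof (conv_ld f y x (df x) Hf (Hl ltac:(lra)) Hy H). nra.
Qed.

Lemma phi_prop m : 1 <= m ->
  1 <= phi_f m /\
  ((phi_f m ^ 2 + (m - 2) * phi_f m - 2 = 0) \/ (phi_f m = 1 /\ 3 <= m)).
Proof.
  intros Hm. unfold phi_f.
  set (s := sqrt (m ^ 2 - 4 * m + 12)).
  assert (Hs0 : 0 <= m ^ 2 - 4 * m + 12) by nra.
  assert (Hs : s * s = m ^ 2 - 4 * m + 12) by (unfold s; apply sqrt_sqrt; auto).
  assert (Hsp : 0 <= s) by (unfold s; apply sqrt_pos).
  unfold Rmax. destruct Rle_dec as [H|H].
  - split; [lra|]. right; split; auto. nra.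
  - split; [lra|]. left. nra.
Qed.

Lemma fkey m X r : 1 <= m -> 0 <= r -> r <= X ->
  f_bound m * (X ^ 2 + 2 * r * X + m * r ^ 2) <= X ^ 2 + 2 * r ^ 2.
Proof.
  intros Hm Hr HX. unfold f_bound.
  destruct (phi_prop m Hm) as [Hp Hc]. set (ps := phi_f m) in *.
  assert (HD : 0 < ps ^ 2 + 2 * ps + m) by nra.
  apply (Rmult_le_reg_r (ps ^ 2 + 2 * ps + m)); auto.
  replace ((ps ^ 2 + 2) / (ps ^ 2 + 2 * ps + m) * (X ^ 2 + 2 * r * X + m * r ^ 2) *
    (ps ^ 2 + 2 * ps + m)) with ((ps ^ 2 + 2) * (X ^ 2 + 2 * r * X + m * r ^ 2)) by (field; lra).
  assert (E : (X ^ 2 + 2 * r ^ 2) * (ps ^ 2 + 2 * ps + m) - (ps ^ 2 + 2) * (X ^ 2 + 2 * r * X + m * r ^ 2)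
     = (X - ps * r) * (2 * X * ps + (m - 2) * (X + ps * r) - 4 * r)) by ring.
  destruct Hc as [Hc | [Hc Hm3]].
  - assert (E2 : ps * ((X - ps * r) * (2 * X * ps + (m - 2) * (X + ps * r) - 4 * r))
                 = (ps ^ 2 + 2) * (X - ps * r) ^ 2).
    { assert (E3 : ps * ((X - ps * r) * (2 * X * ps + (m - 2) * (X + ps * r) - 4 * r))
                 - (ps ^ 2 + 2) * (X - ps * r) ^ 2 = (X - ps * r) * (X + r * ps) * (ps ^ 2 + (m - 2) * ps - 2)) by ring.
      rewrite Hc, Rmult_0_r in E3. lra. }
    assert (0 <= (X - ps * r) * (2 * X * ps + (m - 2) * (X + ps * r) - 4 * r)).
    { apply (Rmult_le_reg_l ps); [lra|]. rewrite Rmult_0_r, E2. apply Rmult_le_pos; [nra|apply pow2_ge_0]. }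
    lra.
  - rewrite Hc in E |- *.
    assert (0 <= (X - 1 * r) * (2 * X * 1 + (m - 2) * (X + 1 * r) - 4 * r)).
    { apply Rmult_le_pos; nra. }
    lra.
Qed.

Lemma f_range m : 1 <= m -> 0 < f_bound m <= 1.
Proof.
  intros Hm. unfold f_bound. destruct (phi_prop m Hm) as [Hp _]. set (ps := phi_f m) in *.
  split. apply Rdiv_lt_0_compat; nra.
  apply (Rmult_le_reg_r (ps ^ 2 + 2 * ps + m)). nra.
  unfold Rdiv; rewrite Rmult_assoc, Rinv_l; nra.
Qed.

Lemma sumN_le f g N : (forall n, (n < N)%nat -> f n <= g n) -> sumN f N <= sumN g N.
Proof. induction N; simpl; intros H. lra. pose proof (H N ltac:(lia)). pose proof (IHN ltac:(intros; apply H; lia)). lra. Qed.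

Lemma sumN_ext f g N : (forall n, (n < N)%nat -> f n = g n) -> sumN f N = sumN g N.
Proof. induction N; simpl; intros H. lra. rewrite (H N ltac:(lia)), IHN; auto. Qed.

Lemma sumN_plus f g N : sumN (fun n => f n + g n) N = sumN f N + sumN g N.
Proof. induction N; simpl. lra. rewrite IHN; lra. Qed.

Lemma sumN_scal k f N : sumN (fun n => k * f n) N = k * sumN f N.
Proof. induction N; simpl. lra. rewrite IHN; lra. Qed.

Lemma sumN_nonneg f N : (forall n, (n < N)%nat -> 0 <= f n) -> 0 <= sumN f N.
Proof. induction N; simpl; intros H. lra. pose proof (H N ltac:(lia)). pose proof (IHN ltac:(intros; apply H; lia)). lra. Qed.

Lemma sumN_term f N j : (forall n, (n < N)%nat -> 0 <= f n) -> (j < N)%nat -> f j <= sumN f N.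
Proof.
  induction N; simpl; intros H Hj. lia.
  destruct (Nat.eq_dec j N).
  - subst. pose proof (sumN_nonneg f N ltac:(intros; apply H; lia)). lra.
  - pose proof (H N ltac:(lia)). pose proof (IHN ltac:(intros; apply H; lia) ltac:(lia)). lra.
Qed.

Lemma sumN_single f N j : (j < N)%nat -> (forall n, (n < N)%nat -> n <> j -> f n = 0) -> sumN f N = f j.
Proof.
  induction N; simpl; intros Hj H. lia.
  destruct (Nat.eq_dec j N).
  - subst. assert (E : sumN f N = sumN (fun _ => 0) N) by (apply sumN_ext; intros; apply H; lia).
    rewrite E. clear. induction N; simpl; lra.
  - rewrite IHN, (H N); auto; try lia; try lra; intros; apply H; lia.
Qed.

Lemma argmin (a : nat -> R) N : (0 < N)%nat -> exists j, (j < N)%nat /\ forall n, (n < N)%nat -> a j <= a n.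
Proof.
  induction N; intros H. lia.
  destruct (Nat.eq_dec N 0) as [HN0|HN0].
  - subst. exists 0%nat; split; auto. intros n Hn; replace n with 0%nat by lia; lra.
  - destruct (IHN ltac:(lia)) as [j [Hj Hm]].
    destruct (Rle_dec (a j) (a N)) as [Hle|Hle].
    + exists j; split; [lia|]. intros n Hn. destruct (Nat.eq_dec n N); [subst; auto|]. apply Hm; lia.
    + exists N; split; [lia|]. intros n Hn. destruct (Nat.eq_dec n N); [subst; lra|].
      pose proof (Hm n ltac:(lia)). lra.
Qed.

Theorem corollary1 (N : nat) (C dC : nat -> R -> R) (p dpL dpR : R -> R)
  (Q : R) (x : nat -> R) :
  Assumption1 N C dC ->
  Assumption2 p dpL dpR ->
  Assumption3 N p dC ->
  Assumption4 N p dC ->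
  convex_nonneg p ->
  0 < Q -> p Q = 0 ->
  dpL Q <> 0 ->
  cournot_candidate N p dpL dpR dC x ->
  forall xS, social_optimum N p C xS ->
    f_bound (dpR 0 / dpL Q) <= efficiency N p C x xS.
Proof.
  intros HA1 HA2 _ HA4 Hpc HQ HpQ HdQ Hcand xS HxS.
  destruct HA2 as [Hpcont [Hpnn [Hpni [Hp0 [HdR0 Hpd]]]]].
  destruct Hcand as [Hxnn Hcc].
  destruct HA4 as [n0 [Hn0 Ha0]].
  set (X := sumN x N) in *.
  set (P := p X) in *.
  set (a := fun n => dC n (x n)).
  assert (Hsup : forall n, (n < N)%nat -> forall y, 0 <= y -> C n (x n) + a n * (y - x n) <= C n y).
  { intros n Hn y Hy. destruct (HA1 n Hn) as [Hc [_ [_ [_ [_ [Hr [Hd _]]]]]]].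
    apply cost_support; auto.
    - destruct (Rle_lt_or_eq_dec 0 (x n) (Hxnn n Hn)) as [Hl|He].
      + apply dpl_rd; auto.
      + rewrite <- He; auto.
    - intros Hl; apply dpl_ld; auto. }
  assert (Hapos : forall n, (n < N)%nat -> 0 <= a n).
  { intros n Hn. destruct (HA1 n Hn) as [Hc [_ [Hnd [_ [_ [Hr [Hd _]]]]]]].
    apply (rd_nonneg (C n) (x n)); auto.
    destruct (Rle_lt_or_eq_dec 0 (x n) (Hxnn n Hn)) as [Hl|He].
    + apply dpl_rd; auto.
    + unfold a; rewrite <- He; auto. }
  assert (HN : (0 < N)%nat) by lia.
  assert (HX0 : 0 <= X) by (apply sumN_nonneg; auto).
  assert (Hxle : forall n, (n < N)%nat -> x n <= X) by (intros; apply sumN_term; auto).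
  assert (HX : 0 < X).
  { destruct (Rle_lt_or_eq_dec 0 X HX0) as [|HX]; auto. exfalso.
    assert (x n0 = 0) by (pose proof (Hxnn n0 Hn0); pose proof (Hxle n0 Hn0); lra).
    destruct (Hcc n0 Hn0) as [_ H2]. fold X in H2. unfold P in H2. rewrite H, <- HX in H2.
    lra. }
  destruct (Hpd X HX) as [HlX HrX].
  destruct (Hpd Q HQ) as [HlQ _].
  assert (HdX0 : dpL X <= 0) by (apply (ld_nonpos p X); auto).
  assert (HdXlr : dpL X <= dpR X) by (apply (conv_lr p X); auto).
  assert (HdQ0 : dpL Q < 0) by (pose proof (ld_nonpos p Q (dpL Q) Hpc Hpni HlQ HQ); lra).
  assert (H0X : dpR 0 <= dpL X).
  { pose proof (conv_rd p 0 X (dpR 0) Hpc HdR0 ltac:(lra) HX) as H1.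
    pose proof (conv_ld p 0 X (dpL X) Hpc HlX ltac:(lra) HX) as H2. nra. }
  assert (H0Q : dpR 0 <= dpL Q).
  { pose proof (conv_rd p 0 Q (dpR 0) Hpc HdR0 ltac:(lra) HQ).
    pose proof (conv_ld p 0 Q (dpL Q) Hpc HlQ ltac:(lra) HQ). nra. }
  set (mu := dpR 0 / dpL Q).
  assert (Emu : mu * dpL Q = dpR 0) by (unfold mu; field; lra).
  assert (Hmu : 1 <= mu) by nra.
  set (d := - dpL X). set (g := - dpL Q).
  assert (Hg : 0 < g) by (unfold g; lra).
  assert (Hd0 : 0 <= d) by (unfold d; lra).
  assert (Hdmu : d <= mu * g) by (unfold d, g; nra).
  destruct (argmin a N HN) as [j [Hj Hjm]].
  set (c := a j). set (r := x j).
  assert (Hc0 : 0 <= c) by (apply Hapos; auto).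
  assert (Hr0 : 0 <= r) by (apply Hxnn; auto).
  assert (HrXle : r <= X) by (apply Hxle; auto).
  set (c2 := Rmax 0 (P - c)).
  assert (Hc2a : 0 <= c2) by apply Rmax_l.
  assert (Hc2b : P - c <= c2) by apply Rmax_r.
  assert (Hc2rd : c2 <= r * d).
  { destruct (Hcc j Hj) as [_ H2].
    assert (H3 : P + r * dpR X <= c) by exact H2.
    assert (H4 : r * dpL X <= r * dpR X) by (apply Rmult_le_compat_l; auto).
    unfold c2, Rmax. destruct Rle_dec.
    - unfold d. lra.
    - unfold d. nra. }
  assert (HpgeP : forall q, 0 <= q -> q <= X -> P <= p q) by (intros; apply Hpni; auto).
  assert (HpleP : forall q, X <= q -> p q <= P) by (intros; apply Hpni; lra).
  set (I := RInt p 0 X - P * X).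
  assert (HI : d * X ^ 2 / 2 <= I).
  { assert (H : (P + d * X) * (X - 0) + (- d) * (X * X - 0 * 0) / 2 <= RInt p 0 X).
    { apply int_ge_aff; auto; try lra. intros q Hq.
      pose proof (conv_ld p q X (dpL X) Hpc HlX ltac:(lra) ltac:(lra)). fold P in H.
      unfold d. nra. }
    unfold I. nra. }
  assert (Hbound : forall Y, 0 <= Y -> RInt p 0 Y - c * Y <= I + c2 * X + c2 ^ 2 / (2 * g)).
  { intros Y HY.
    assert (Hsq : 0 <= c2 ^ 2 / (2 * g)).
    { apply Rdiv_le_0_compat; [apply pow2_ge_0|lra]. }
    destruct (Rle_dec Y X) as [HYX|HYX].
    - pose proof (Chas p Y X Hpcont HY HX0) as EC.
      assert (H : P * (X - Y) + 0 * (X * X - Y * Y) / 2 <= RInt p Y X).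
      { apply int_ge_aff; auto; try lra. intros q Hq. pose proof (HpgeP q ltac:(lra) ltac:(lra)). lra. }
      assert (H2 : (P - c) * Y <= c2 * X).
      { apply Rle_trans with (c2 * Y). apply Rmult_le_compat_r; lra. apply Rmult_le_compat_l; lra. }
      replace (0 * (X * X - Y * Y) / 2) with 0 in H by field.
      unfold I. rewrite EC. lra.
    - rewrite (Chas p X Y Hpcont HX0) by lra.
      destruct (Rle_dec P c) as [HPc|HPc].
      + assert (H : RInt p X Y <= P * (Y - X) + 0 * (Y * Y - X * X) / 2).
        { apply int_le_aff; auto; try lra. intros q Hq. pose proof (HpleP q ltac:(lra)). lra. }
        assert (H2 : 0 <= c2 * X) by (apply Rmult_le_pos; lra).
        replace (0 * (Y * Y - X * X) / 2) with 0 in H by field.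
        unfold I. nra.
      + set (cp := P - c).
        assert (Ec2 : c2 = cp) by (unfold c2, cp, Rmax; destruct Rle_dec; lra).
        rewrite Ec2.
        assert (HXQ : X < Q).
        { destruct (Rlt_le_dec X Q) as [|HQX]; auto. pose proof (Hpni Q X ltac:(lra) HQX) as HH. fold P in HH. lra. }
        assert (PgQ : g * (Q - X) <= P).
        { pose proof (conv_ld p X Q (dpL Q) Hpc HlQ HX0 HXQ) as HH. fold P in HH. unfold g. lra. }
        assert (Hchord : forall q, X <= q <= Q -> p q <= P - g * (q - X)).
        { intros q Hq. destruct (Rle_lt_or_eq_dec X q ltac:(lra)) as [Hq1|Hq1].
          - destruct (Rle_lt_or_eq_dec q Q ltac:(lra)) as [Hq2|Hq2].
            + pose proof (conv3 p X q Q Hpc HX0 Hq1 Hq2) as H3. rewrite HpQ in H3. fold P in H3.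
              assert (0 <= (q - X) * (P - g * (Q - X))) by (apply Rmult_le_pos; lra).
              nra.
            + subst q. rewrite HpQ. lra.
          - subst q. unfold P. nra. }
        set (u0 := cp / g).
        assert (Eu0 : g * u0 = cp) by (unfold u0; field; lra).
        assert (Hu0 : 0 < u0) by (unfold u0, cp; apply Rdiv_lt_0_compat; lra).
        set (Z := X + u0).
        assert (Hseg : forall T, X <= T <= Z -> RInt p X T <= P * (T - X) - g * (T - X) ^ 2 / 2).
        { intros T HT.
          assert (H : RInt p X T <= (P + g * X) * (T - X) + (- g) * (T * T - X * X) / 2).
          { apply int_le_aff; auto; try lra. intros q Hq.
            destruct (Rle_dec q Q) as [HqQ|HqQ].
            - pose proof (Hchord q ltac:(lra)). lra.
            - pose proof (Hpni Q q ltac:(lra) ltac:(lra)). rewrite HpQ in H.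
              assert (g * (q - X) <= g * u0) by (apply Rmult_le_compat_l; unfold Z in *; lra).
              unfold cp in Eu0. lra. }
          replace (P * (T - X) - g * (T - X) ^ 2 / 2) with
            ((P + g * X) * (T - X) + (- g) * (T * T - X * X) / 2) by field. auto. }
        destruct (Rle_dec Y Z) as [HYZ|HYZ].
        * pose proof (Hseg Y ltac:(lra)) as H.
          assert (Esq : cp ^ 2 / (2 * g) - cp * (Y - X) + g * (Y - X) ^ 2 / 2
                       = (cp - g * (Y - X)) ^ 2 / (2 * g)) by (field; lra).
          assert (0 <= (cp - g * (Y - X)) ^ 2 / (2 * g)).
          { apply Rdiv_le_0_compat; [apply pow2_ge_0|lra]. }
          unfold I, cp in *. nra.
        * rewrite <- (Chas p X Y Hpcont HX0) by lra.
          rewrite (Chas p Z Y Hpcont) by (unfold Z in *; lra).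
          rewrite (Chas p X Z Hpcont HX0) by (unfold Z in *; lra).
          pose proof (Hseg Z ltac:(unfold Z; lra)) as H.
          assert (H2 : RInt p Z Y <= c * (Y - Z) + 0 * (Y * Y - Z * Z) / 2).
          { apply int_le_aff; auto; try (unfold Z in *; lra). intros q Hq.
            destruct (Rle_dec q Q) as [HqQ|HqQ].
            - pose proof (Hchord q ltac:(unfold Z in *; lra)).
              assert (g * u0 <= g * (q - X)) by (apply Rmult_le_compat_l; unfold Z in *; lra).
              unfold cp in Eu0. lra.
            - pose proof (Hpni Q q ltac:(lra) ltac:(lra)). rewrite HpQ in H0. lra. }
          replace (Z - X) with u0 in H by (unfold Z; ring).
          assert (E : cp ^ 2 / (2 * g) = cp * u0 / 2) by (unfold u0; field; lra).
          replace (0 * (Y * Y - Z * Z) / 2) with 0 in H2 by field.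
          assert (Eg : g * u0 ^ 2 = cp * u0) by (rewrite <- Eu0; ring).
          unfold I. rewrite E. unfold cp, Z in *. lra. }
  set (k := fun n => a n * x n - C n (x n)).
  assert (Hk : forall n, (n < N)%nat -> 0 <= k n).
  { intros n Hn. pose proof (Hsup n Hn 0 ltac:(lra)) as H.
    destruct (HA1 n Hn) as [_ [_ [_ [_ [HC0 _]]]]].
    unfold k. rewrite HC0 in H. lra. }
  set (K := sumN k N).
  assert (HK : 0 <= K) by (apply sumN_nonneg; auto).
  set (S2 := sumN (fun n => x n * x n) N).
  assert (HS2 : r * r <= S2).
  { apply (sumN_term (fun n => x n * x n)); auto. intros n Hn. pose proof (Hxnn n Hn). nra. }
  assert (HWx : I + d * S2 + K <= welfare N p C x).
  { unfold welfare. fold X. rewrite F_eq by auto.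
    assert (Hs : sumN (fun n => C n (x n)) N <=
                 sumN (fun n => (P * x n + (-d) * (x n * x n)) + (-1) * k n) N).
    { apply sumN_le. intros n Hn. destruct (Hcc n Hn) as [H1 _].
      assert (H1' : 0 < x n -> a n <= P + x n * dpL X) by exact H1.
      assert (Hax : a n * x n <= P * x n + dpL X * (x n * x n)).
      { destruct (Rle_lt_or_eq_dec 0 (x n) (Hxnn n Hn)) as [Hl|He].
        - pose proof (H1' Hl). nra.
        - rewrite <- He. lra. }
      unfold k, d. lra. }
    rewrite sumN_plus, sumN_plus, !sumN_scal in Hs. fold K S2 X in Hs.
    unfold I. lra. }
  assert (HWy : forall y, nonneg_profile N y -> welfare N p C y <= I + c2 * X + c2 ^ 2 / (2 * g) + K).
  { intros y Hy. unfold welfare.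
    assert (HY : 0 <= sumN y N) by (apply sumN_nonneg; auto).
    rewrite F_eq by auto.
    assert (Hs : sumN (fun n => c * y n + (-1) * k n) N <= sumN (fun n => C n (y n)) N).
    { apply sumN_le. intros n Hn. pose proof (Hsup n Hn (y n) (Hy n Hn)) as H.
      pose proof (Hjm n Hn). pose proof (Hy n Hn).
      assert (c * y n <= a n * y n) by (apply Rmult_le_compat_r; auto).
      unfold k. fold c. nra. }
    rewrite sumN_plus, !sumN_scal in Hs. fold K in Hs.
    pose proof (Hbound (sumN y N) HY). lra. }
  assert (HWpos : exists y, nonneg_profile N y /\ 0 < welfare N p C y).
  { set (a0 := dC n0 0) in *.
    destruct (HA1 n0 Hn0) as [_ [_ [_ [_ [HC0 [Hr0' _]]]]]].
    set (del := (p 0 - a0) / 2).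
    assert (Hdel : 0 < del) by (unfold del; lra).
    destruct (Hr0' del Hdel) as [dc [Hdc Hdc']].
    set (m := - dpR 0).
    assert (Hm : 0 <= m) by (unfold m; lra).
    set (eps := Rmin (dc / 2) (del / (m + 1))).
    assert (Hdm : 0 < del / (m + 1)) by (apply Rdiv_lt_0_compat; lra).
    assert (He1 : 0 < eps) by (unfold eps, Rmin; destruct Rle_dec; lra).
    assert (He2 : eps < dc) by (unfold eps, Rmin; destruct Rle_dec; lra).
    assert (He3 : eps <= del / (m + 1)) by (unfold eps, Rmin; destruct Rle_dec; lra).
    assert (Hme : m * eps < del).
    { assert (eps * (m + 1) <= del).
      { apply (Rmult_le_compat_r (m + 1)) in He3; [|lra].
        replace (del / (m + 1) * (m + 1)) with del in He3 by (field; lra). lra. }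
      nra. }
    exists (fun n => if Nat.eq_dec n n0 then eps else 0).
    split. { intros n Hn; destruct Nat.eq_dec; lra. }
    unfold welfare.
    rewrite (sumN_single _ N n0 Hn0).
    2:{ intros n Hn Hne. destruct Nat.eq_dec; [lia|auto]. }
    rewrite (sumN_single _ N n0 Hn0).
    2:{ intros n Hn Hne. destruct Nat.eq_dec; [lia|]. destruct (HA1 n Hn) as [_ [_ [_ [_ [HC0n _]]]]]. auto. }
    destruct Nat.eq_dec; [|lia].
    rewrite F_eq by (auto; lra).
    assert (HI0 : p 0 * (eps - 0) + dpR 0 * (eps * eps - 0 * 0) / 2 <= RInt p 0 eps).
    { apply int_ge_aff; auto; try lra. intros q Hq.
      pose proof (conv_rd p 0 q (dpR 0) Hpc HdR0 ltac:(lra) ltac:(lra)). lra. }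
    specialize (Hdc' eps ltac:(lra)). rewrite Rplus_0_l, HC0 in Hdc'.
    apply Rabs_def2 in Hdc'. destruct Hdc' as [Hq1 Hq2].
    assert (HCe : C n0 eps < (a0 + del) * eps).
    { replace ((C n0 eps - 0) / eps) with (C n0 eps / eps) in Hq1 by (field; lra).
      fold a0 in Hq1. assert (Hq3 : C n0 eps / eps < a0 + del) by lra.
      apply (Rmult_lt_compat_r eps) in Hq3; [|lra].
      replace (C n0 eps / eps * eps) with (C n0 eps) in Hq3 by (field; lra). lra. }
    assert (Hdel2 : p 0 - a0 = 2 * del) by (unfold del; field).
    unfold m in Hme. nra. }
  destruct HxS as [HxSnn HxSopt].
  assert (HWs : 0 < welfare N p C xS).
  { destruct HWpos as [y [Hy Hy']]. pose proof (HxSopt y Hy). lra. }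
  pose proof (HWy xS HxSnn) as HWs2.
  set (Wx := welfare N p C x) in *. set (Ws := welfare N p C xS) in *.
  unfold efficiency. fold Wx Ws. fold mu.
  destruct (f_range mu Hmu) as [Hf0 Hf1].
  pose proof (fkey mu X r Hmu Hr0 HrXle) as Hkey.
  set (f := f_bound mu) in *.
  assert (Hc2sq : c2 ^ 2 <= r ^ 2 * d * mu * g).
  { assert (c2 ^ 2 <= (r * d) ^ 2) by (apply pow_incr; lra).
    assert (d * d <= d * (mu * g)) by (apply Rmult_le_compat_l; lra).
    assert (0 <= r ^ 2) by apply pow2_ge_0. nra. }
  assert (Hc2sq' : c2 ^ 2 / (2 * g) <= r ^ 2 * d * mu / 2).
  { replace (r ^ 2 * d * mu / 2) with ((r ^ 2 * d * mu * g) / (2 * g)) by (field; lra).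
    unfold Rdiv. apply Rmult_le_compat_r; auto. left; apply Rinv_0_lt_compat; lra. }
  assert (Hc2X : c2 * X <= r * d * X) by (apply Rmult_le_compat_r; lra).
  assert (HfB : f * Ws <= I + d * S2 + K).
  { apply Rle_trans with (f * (I + r * d * X + r ^ 2 * d * mu / 2 + K)).
    { apply Rmult_le_compat_l; lra. }
    assert (0 <= (1 - f) * (I - d * X ^ 2 / 2)) by (apply Rmult_le_pos; lra).
    assert (0 <= (1 - f) * K) by (apply Rmult_le_pos; lra).
    assert (0 <= d * (S2 - r * r)) by (apply Rmult_le_pos; lra).
    assert (0 <= d * (X ^ 2 + 2 * r ^ 2 - f * (X ^ 2 + 2 * r * X + mu * r ^ 2)))
      by (apply Rmult_le_pos; lra).
    nra. }
  apply (Rmult_le_reg_r Ws); auto.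
  unfold Rdiv. rewrite Rmult_assoc, Rinv_l, Rmult_1_r; lra.
Qed.
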